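(* Let $\Gamma$ be a maximal consistent set of SBTrust, $\delta$ a propositional formula, and $(\Delta,\varphi,i)\in\mathit{max}([\delta]_\Gamma)$. Then (a) $\Delta$ is $\varphi$-likely for $\Gamma$; and (b) $\neg(\delta\to\varphi)\rightsquigarrow\bot\in\Gamma$.
   Context: $\mathcal{L}_T$: $\alpha::=\varphi\mid\varphi\rightsquigarrow\varphi\mid B(\alpha)\mid\alpha*\alpha\mid\neg\alpha$, with $\varphi$ ranging over classical propositional formulas (set $\mathcal{L}_{CL}$) and $*\in\{\land,\lor,\to,\leftrightarrow\}$. SBTrust is the Hilbert system ($\varphi,\psi,\chi,\varphi_i,\psi_i$ propositional; $\alpha,\beta\in\mathcal{L}_T$; rule outputs in $\mathcal{L}_T$): classical tautologies and Modus Ponens; $\varphi\rightsquigarrow\varphi$; $(\varphi\rightsquigarrow\bot)\to\neg\varphi$; $((\psi\land\chi)\rightsquigarrow\varphi)\to(\psi\rightsquigarrow(\chi\to\varphi))$; $(\neg(\varphi\leftrightarrow\psi)\rightsquigarrow\bot)\to((\varphi\rightsquigarrow\chi)\leftrightarrow(\psi\rightsquigarrow\chi))$; rule RCK: from $(\varphi_1\land\dots\land\varphi_n)\to\varphi_{n+1}$ infer $\bigwedge_{j\le n}(\psi\rightsquigarrow\varphi_j)\to(\psi\rightsquigarrow\varphi_{n+1})$; rule $\mathbf{S5_F}$: from $(\ell_1\land\dots\land\ell_n)\to\chi$ infer $(\ell_1\land\dots\land\ell_n)\to(\neg\chi\rightsquigarrow\bot)$, each $\ell_j$ being $\varphi_j\rightsquigarrow\psi_j$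 or its negation, $\chi$ propositional; $B(\alpha\to\beta)\to(B\alpha\to B\beta)$; $B\alpha\to\neg B\neg\alpha$; $B\alpha\to BB\alpha$; necessitation for $B$. A maximal consistent set (MCS) is $\Gamma\subseteq\mathcal{L}_T$ with $\Gamma\nvdash\bot$ and, for each $\alpha$, $\alpha\in\Gamma$ or $\neg\alpha\in\Gamma$. For MCSs, $\Gamma\leftrightsquigarrow\Delta$ iff they contain the same formulas of the form $\chi\rightsquigarrow\psi$; $[\Gamma]_\leftrightsquigarrow$ is the equivalence class. $\rightsquigarrow_\varphi(\Gamma)=\{\psi:\varphi\rightsquigarrow\psi\in\Gamma\}$, and $\Delta$ is $\varphi$-likely for $\Gamma$ if $\rightsquigarrow_\varphi(\Gamma)\subseteq\Delta$. Let $S_\Gamma=[\Gamma]_\leftrightsquigarrow\times\mathcal{L}_{CL}\times\{0,1,2\}$ and $[\delta]_\Gamma=\{(\Delta,\varphi,i)\in S_\Gamma:\delta\in\Delta\}$. Define $\succeq_\Gamma\subseteq S_\Gamma\times S_\Gamma$ by: $(\Delta,\varphi,i)\succeq_\Gamma(\Omega,\psi,j)$ iff ($\Delta$ is $\varphi$-likely for $\Gamma$ and $\varphi\in\Omega$) or ($i=1,j=0$) or ($i=2,j=1$) or ($i=0,j=2$). For $X\subseteq S_\Gamma$, $\mathit{max}(X)=\{x\in X:\forall y\in X\,(y\succeq_\Gamma x\Rightarrow x\succeq_\Gamma y)\}$. *)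

(* Defs.v *)
From Stdlib Require Import List Bool.
Import ListNotations.

Inductive pform : Type :=
| PAtom : nat -> pform
| PBot : pform
| PNeg : pform -> pform
| PAnd : pform -> pform -> pform
| POr : pform -> pform -> pform
| PImp : pform -> pform -> pform
| PIff : pform -> pform -> pform.

Definition PTop : pform := PNeg PBot.

Fixpoint pbigand (l : list pform) : pform :=
  match l with [] => PTop | x :: xs => PAnd x (pbigand xs) end.

Fixpoint peval (v : nat -> bool) (f : pform) : bool :=
  match f with
  | PAtom n => v n
  | PBot => false
  | PNeg a => negb (peval v a)
  | PAnd a b => peval v a && peval v b
  | POr a b => peval v a || peval v b
  | PImp a b => implb (peval v a) (peval v b)
  | PIff a b => eqb (peval v a) (peval v b)
  end.

Inductive tform : Type :=
| TProp : pform -> tform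
| TCond : pform -> pform -> tform
| TB : tform -> tform
| TAnd : tform -> tform -> tform
| TOr : tform -> tform -> tform
| TImp : tform -> tform -> tform
| TIff : tform -> tform -> tform
| TNeg : tform -> tform.

Definition TBot : tform := TProp PBot.
Definition TTop : tform := TNeg TBot.

Fixpoint tbigand (l : list tform) : tform :=
  match l with [] => TTop | x :: xs => TAnd x (tbigand xs) end.

(** Classical (propositional) tautologies of L_T: true under every boolean
    valuation of propositional atoms, of ~>-formulas and of B-formulas. *)
Fixpoint teval (va : nat -> bool) (vc : pform -> pform -> bool)
  (vb : tform -> bool) (a : tform) : bool :=
  match a with
  | TProp f => peval va f
  | TCond f g => vc f g
  | TB b => vb b
  | TAnd x y => teval va vc vb x && teval va vc vb y
  | TOr x y => teval va vc vb x || teval va vc vb y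
  | TImp x y => implb (teval va vc vb x) (teval va vc vb y)
  | TIff x y => eqb (teval va vc vb x) (teval va vc vb y)
  | TNeg x => negb (teval va vc vb x)
  end.

Definition tautology (a : tform) : Prop :=
  forall va vc vb, teval va vc vb a = true.

Definition cond_literal (l : tform) : Prop :=
  exists f g, l = TCond f g \/ l = TNeg (TCond f g).

Inductive thm : tform -> Prop :=
| Ax_taut : forall a, tautology a -> thm a
| R_MP : forall a b, thm (TImp a b) -> thm a -> thm b
| Ax_id : forall f, thm (TCond f f)
| Ax_bot : forall f, thm (TImp (TCond f PBot) (TNeg (TProp f)))
| Ax_and : forall f g h,
    thm (TImp (TCond (PAnd g h) f) (TCond g (PImp h f)))
| Ax_eq : forall f g h,
    thm (TImp (TCond (PNeg (PIff f g)) PBot)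
              (TIff (TCond f h) (TCond g h)))
| R_RCK : forall (l : list pform) (f g : pform),
    thm (TProp (PImp (pbigand l) f)) ->
    thm (TImp (tbigand (map (fun x => TCond g x) l)) (TCond g f))
| R_S5F : forall (l : list tform) (c : pform),
    Forall cond_literal l ->
    thm (TImp (tbigand l) (TProp c)) ->
    thm (TImp (tbigand l) (TCond (PNeg c) PBot))
| Ax_K : forall a b, thm (TImp (TB (TImp a b)) (TImp (TB a) (TB b)))
| Ax_D : forall a, thm (TImp (TB a) (TNeg (TB (TNeg a))))
| Ax_4 : forall a, thm (TImp (TB a) (TB (TB a)))
| R_Nec : forall a, thm a -> thm (TB a).

(** Derivability from a set of premises (premises closed under MP only). *)
Inductive derives (G : tform -> Prop) : tform -> Prop :=
| D_hyp : forall a, G a -> derives G a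
| D_thm : forall a, thm a -> derives G a
| D_MP : forall a b, derives G (TImp a b) -> derives G a -> derives G b.

Definition MCS (G : tform -> Prop) : Prop :=
  ~ derives G TBot /\ forall a, G a \/ G (TNeg a).

Definition cond_equiv (G D : tform -> Prop) : Prop :=
  forall f g, G (TCond f g) <-> D (TCond f g).

Definition likely (G : tform -> Prop) (f : pform) (D : tform -> Prop) : Prop :=
  forall g, G (TCond f g) -> D (TProp g).

Definition state : Type := ((tform -> Prop) * pform * nat)%type.

Definition in_S (G : tform -> Prop) (x : state) : Prop :=
  let '(D, _, i) := x in MCS D /\ cond_equiv G D /\ i < 3.

Definition trset (G : tform -> Prop) (d : pform) (x : state) : Prop :=
  in_S G x /\ let '(D, _, _) := x in D (TProp d).

Definition sgeq (G : tform -> Prop) (x y : state) : Prop :=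
  let '(D, f, i) := x in
  let '(Om, _, j) := y in
  (likely G f D /\ Om (TProp f))
  \/ (i = 1 /\ j = 0) \/ (i = 2 /\ j = 1) \/ (i = 0 /\ j = 2).

Definition maxset (G : tform -> Prop) (X : state -> Prop) (x : state) : Prop :=
  X x /\ forall y, X y -> sgeq G y x -> sgeq G x y.

(* Main.v *)
Require Import Defs.
From Stdlib Require Import List Bool Classical Lia Arith.
Import ListNotations.

Ltac taut := apply Ax_taut; intros va vc vb; unfold TBot, TTop in *; cbn;
  repeat match goal with |- context [teval ?x ?y ?z ?w] => destruct (teval x y z w) end;
  reflexivity.

Definition subs (S1 S2 : tform -> Prop) := forall x, S1 x -> S2 x.

Lemma derives_mono S1 S2 b : derives S1 b -> subs S1 S2 -> derives S2 b.
Proof. induction 1; intros Hs; [apply D_hyp; auto | apply D_thm; auto | eapply D_MP; eauto]. Qed.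

Lemma deduction S1 a b : derives (fun y => S1 y \/ y = a) b -> derives S1 (TImp a b).
Proof.
  induction 1 as [x Hx | x Hx | x y _ IH1 _ IH2].
  - destruct Hx as [Hx|Hx].
    + apply (D_MP _ x); [apply D_thm; taut | apply D_hyp; exact Hx].
    + subst. apply D_thm; taut.
  - apply (D_MP _ x); [apply D_thm; taut | apply D_thm; exact Hx].
  - apply (D_MP _ (TImp a x)); [apply (D_MP _ (TImp a (TImp x y))); [apply D_thm; taut | exact IH1] | exact IH2].
Qed.

Lemma mcs_closed G a : MCS G -> derives G a -> G a.
Proof. intros [Hc Hm] Hd. destruct (Hm a) as [H|H]; auto. exfalso; apply Hc.
  apply (D_MP _ a); [apply (D_MP _ (TNeg a)); [apply D_thm; taut | apply D_hyp; exact H] | exact Hd]. Qed.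

Lemma mcs_noboth O a : MCS O -> O a -> O (TNeg a) -> False.
Proof. intros [Hc _] H1 H2. apply Hc.
  apply (D_MP _ a); [apply (D_MP _ (TNeg a)); [apply D_thm; taut | apply D_hyp; exact H2] | apply D_hyp; exact H1]. Qed.

Definition add (S1 : tform -> Prop) a : tform -> Prop := fun x =>
  S1 x \/ (x = a /\ ~ derives (fun y => S1 y \/ y = a) TBot)
      \/ (x = TNeg a /\ derives (fun y => S1 y \/ y = a) TBot).

Lemma add_sub S1 a : subs S1 (add S1 a). Proof. intros x H; left; exact H. Qed.

Lemma add_cons S1 a : ~ derives S1 TBot -> ~ derives (add S1 a) TBot.
Proof.
  intros Hc. destruct (classic (derives (fun y => S1 y \/ y = a) TBot)) as [H|H].
  - intros Hd. apply Hc.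
    assert (H2 : derives (fun y => S1 y \/ y = TNeg a) TBot).
    { apply (derives_mono _ _ _ Hd). intros x [Hx|[[-> Hn]|[-> _]]]; auto. contradiction. }
    apply deduction in H. apply deduction in H2.
    apply (D_MP _ (TImp (TNeg a) TBot)); [apply (D_MP _ (TImp a TBot)); [apply D_thm; taut | exact H] | exact H2].
  - intros Hd. apply H. apply (derives_mono _ _ _ Hd). intros x [Hx|[[-> _]|[-> Hn]]]; auto. contradiction.
Qed.

Lemma add_dec S1 a : add S1 a a \/ add S1 a (TNeg a).
Proof. destruct (classic (derives (fun y => S1 y \/ y = a) TBot)); [right; right; right | left; right; left]; auto. Qed.

Fixpoint ext S1 l := match l with [] => S1 | a :: l => ext (add S1 a) l end.

Lemma ext_sub l : forall S1, subs S1 (ext S1 l).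
Proof. induction l; simpl; intros S1 x H; auto. apply IHl. apply add_sub; auto. Qed.
Lemma ext_cons l : forall S1, ~derives S1 TBot -> ~derives (ext S1 l) TBot.
Proof. induction l; simpl; auto. intros; apply IHl, add_cons; auto. Qed.
Lemma ext_dec l : forall S1 a, In a l -> ext S1 l a \/ ext S1 l (TNeg a).
Proof.
  induction l as [|b l IH]; simpl; intros S1 a Hin; [contradiction|].
  destruct Hin as [<-|Hin]; [|auto]. destruct (add_dec S1 b); [left|right]; apply ext_sub; auto.
Qed.

Fixpoint chain (en : nat -> list tform) S1 n := match n with 0 => S1 | S k => ext (chain en S1 k) (en k) end.

Lemma chain_mono en S1 n m : n <= m -> subs (chain en S1 n) (chain en S1 m).
Proof. induction 1; intros x Hx; auto. simpl. apply ext_sub. auto. Qed.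

Lemma chain_cons en S1 n : ~ derives S1 TBot -> ~ derives (chain en S1 n) TBot.
Proof. induction n; simpl; auto. intros; apply ext_cons; auto. Qed.

Lemma lindenbaum (en : nat -> list tform) (Hen : forall a, exists k, In a (en k)) S0 :
  ~ derives S0 TBot -> exists O, MCS O /\ subs S0 O.
Proof.
  intros Hc. exists (fun x => exists n, chain en S0 n x). split; [split|].
  - intros Hd.
    assert (H : forall b, derives (fun x => exists n, chain en S0 n x) b -> exists n, derives (chain en S0 n) b).
    { induction 1 as [b [n Hb]| b Hb | b c _ [n1 H1] _ [n2 H2]].
      - exists n; apply D_hyp; auto.
      - exists 0; apply D_thm; auto.
      - exists (max n1 n2). apply (D_MP _ b);
          [apply (derives_mono _ _ _ H1) | apply (derives_mono _ _ _ H2)]; apply chain_mono; lia. }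
    destruct (H _ Hd) as [n Hn]. revert Hn. apply chain_cons; auto.
  - intros a. destruct (Hen a) as [k Hk].
    destruct (ext_dec (en k) (chain en S0 k) a Hk); [left|right]; exists (S k); simpl; auto.
  - intros x Hx; exists 0; simpl; auto.
Qed.

Fixpoint pl n : list pform := match n with
 | 0 => [PBot]
 | S k => PAtom k :: pl k ++ map PNeg (pl k)
     ++ map (fun p => PAnd (fst p) (snd p)) (list_prod (pl k) (pl k))
     ++ map (fun p => POr (fst p) (snd p)) (list_prod (pl k) (pl k))
     ++ map (fun p => PImp (fst p) (snd p)) (list_prod (pl k) (pl k))
     ++ map (fun p => PIff (fst p) (snd p)) (list_prod (pl k) (pl k)) end.

Lemma pl_mono n m p : n <= m -> In p (pl n) -> In p (pl m).
Proof. induction 1; auto. intros H'; simpl; right; apply in_or_app; left; auto. Qed.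

Ltac binc n1 n2 H1 H2 :=
  apply in_map_iff; eexists (_, _); split; [reflexivity|];
  apply in_prod; [apply (pl_mono n1); [lia|exact H1] | apply (pl_mono n2); [lia|exact H2]].

Lemma pl_all p : exists n, In p (pl n).
Proof.
  induction p as [k| |p [n H]|p [n1 H1] q [n2 H2]|p [n1 H1] q [n2 H2]|p [n1 H1] q [n2 H2]|p [n1 H1] q [n2 H2]].
  - exists (S k); simpl; auto.
  - exists 0; simpl; auto.
  - exists (S n); simpl; right; rewrite !in_app_iff; right; left; apply in_map; auto.
  - exists (S (max n1 n2)); simpl; right; rewrite !in_app_iff; do 2 right; left; binc n1 n2 H1 H2.
  - exists (S (max n1 n2)); simpl; right; rewrite !in_app_iff; do 3 right; left; binc n1 n2 H1 H2.
  - exists (S (max n1 n2)); simpl; right; rewrite !in_app_iff; do 4 right; left; binc n1 n2 H1 H2.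
  - exists (S (max n1 n2)); simpl; right; rewrite !in_app_iff; do 5 right; binc n1 n2 H1 H2.
Qed.

Fixpoint tl n : list tform := match n with
 | 0 => []
 | S k => tl k ++ map TProp (pl k)
   ++ map (fun p => TCond (fst p) (snd p)) (list_prod (pl k) (pl k))
   ++ map TB (tl k) ++ map TNeg (tl k)
   ++ map (fun p => TAnd (fst p) (snd p)) (list_prod (tl k) (tl k))
   ++ map (fun p => TOr (fst p) (snd p)) (list_prod (tl k) (tl k))
   ++ map (fun p => TImp (fst p) (snd p)) (list_prod (tl k) (tl k))
   ++ map (fun p => TIff (fst p) (snd p)) (list_prod (tl k) (tl k)) end.

Lemma tl_mono n m p : n <= m -> In p (tl n) -> In p (tl m).
Proof. induction 1; auto. intros H'; simpl; apply in_or_app; left; auto. Qed.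

Ltac binct n1 n2 H1 H2 :=
  apply in_map_iff; eexists (_, _); split; [reflexivity|];
  apply in_prod; [apply (tl_mono n1); [lia|exact H1] | apply (tl_mono n2); [lia|exact H2]].

Lemma tl_all a : exists n, In a (tl n).
Proof.
  induction a as [p|p q|a [n H]|a [n1 H1] b [n2 H2]|a [n1 H1] b [n2 H2]|a [n1 H1] b [n2 H2]|a [n1 H1] b [n2 H2]|a [n H]].
  - destruct (pl_all p) as [n H]. exists (S n); simpl; rewrite !in_app_iff; right; left; apply in_map; auto.
  - destruct (pl_all p) as [n1 H1]; destruct (pl_all q) as [n2 H2].
    exists (S (max n1 n2)); simpl; rewrite !in_app_iff; do 2 right; left; binc n1 n2 H1 H2.
  - exists (S n); simpl; rewrite !in_app_iff; do 3 right; left; apply in_map; auto.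
  - exists (S (max n1 n2)); simpl; rewrite !in_app_iff; do 5 right; left; binct n1 n2 H1 H2.
  - exists (S (max n1 n2)); simpl; rewrite !in_app_iff; do 6 right; left; binct n1 n2 H1 H2.
  - exists (S (max n1 n2)); simpl; rewrite !in_app_iff; do 7 right; left; binct n1 n2 H1 H2.
  - exists (S (max n1 n2)); simpl; rewrite !in_app_iff; do 8 right; binct n1 n2 H1 H2.
  - exists (S n); simpl; rewrite !in_app_iff; do 4 right; left; apply in_map; auto.
Qed.

Lemma teval_bigand va vc vb l :
  teval va vc vb (tbigand l) = true <-> Forall (fun x => teval va vc vb x = true) l.
Proof.
  induction l as [|a l IH]; simpl.
  - split; auto.
  - rewrite andb_true_iff, IH. split; [intros [H1 H2]; constructor; auto | intros H; inversion H; auto].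
Qed.

Lemma bigand_app va vc vb l1 l2 :
  teval va vc vb (tbigand (l1 ++ l2)) = teval va vc vb (tbigand l1) && teval va vc vb (tbigand l2).
Proof. induction l1; simpl; [reflexivity|]. rewrite IHl1, andb_assoc; reflexivity. Qed.

Lemma derives_fin S1 b : derives S1 b -> exists l, Forall S1 l /\ thm (TImp (tbigand l) b).
Proof.
  induction 1 as [a Ha | a Ha | a b _ [l1 [F1 T1]] _ [l2 [F2 T2]]].
  - exists [a]; split; [constructor; auto|]. simpl. taut.
  - exists []; split; [constructor|]. apply (R_MP a); [taut|auto].
  - exists (l1 ++ l2); split; [apply Forall_app; auto|].
    assert (T : thm (TImp (tbigand (l1 ++ l2)) (TAnd (tbigand l1) (tbigand l2)))).
    { apply Ax_taut; intros va vc vb; cbn [teval]; rewrite bigand_app;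
      destruct (teval va vc vb (tbigand l1)), (teval va vc vb (tbigand l2)); reflexivity. }
    assert (T0 : thm (TImp (TImp (tbigand (l1 ++ l2)) (TAnd (tbigand l1) (tbigand l2)))
      (TImp (TImp (tbigand l1) (TImp a b)) (TImp (TImp (tbigand l2) a) (TImp (tbigand (l1 ++ l2)) b))))) by taut.
    exact (R_MP _ _ (R_MP _ _ (R_MP _ _ T0 T) T1) T2).
Qed.

Definition iscl (x : tform) : bool :=
  match x with TCond _ _ => true | TNeg (TCond _ _) => true | _ => false end.

Lemma iscl_lit x : iscl x = true -> cond_literal x.
Proof.
  intros H; destruct x as [p0 | p q | a | a b | a b | a b | a b | x]; try discriminate.
  - exists p, q; left; auto.
  - destruct x as [p0 | p q | a | a b | a b | a b | a b | x]; try discriminate. exists p, q; right; auto.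
Qed.

Lemma mcs_bigand G l : MCS G -> Forall G l -> G (tbigand l).
Proof.
  intros HG; induction 1; simpl.
  - apply mcs_closed; auto. apply D_thm; taut.
  - apply mcs_closed; auto. apply (D_MP _ (tbigand l)); [apply (D_MP _ x)|]; try (apply D_hyp; assumption).
    apply D_thm; taut.
Qed.

Definition S0 (G : tform -> Prop) d f : tform -> Prop := fun x =>
  x = TProp d \/ x = TProp (PNeg f) \/ (iscl x = true /\ G x).

Lemma key G d f va vc vb l : Forall (S0 G d f) l ->
  teval va vc vb (tbigand (filter iscl l)) = true -> peval va d = true -> peval va f = false ->
  teval va vc vb (tbigand l) = true.
Proof.
  intros HF H1 Hd Hf. rewrite teval_bigand, Forall_forall. rewrite teval_bigand, Forall_forall in H1.
  rewrite Forall_forall in HF. intros x Hx. destruct (HF x Hx) as [->|[->|[Hc _]]].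
  - simpl; auto.
  - simpl; rewrite Hf; auto.
  - apply H1. apply filter_In; auto.
Qed.

Lemma S0_cons G d f : MCS G -> ~ G (TCond (PNeg (PImp d f)) PBot) -> ~ derives (S0 G d f) TBot.
Proof.
  intros HG Hn Hd. apply derives_fin in Hd as [l [HF Ht]]. apply Hn.
  assert (T : thm (TImp (tbigand (filter iscl l)) (TProp (PImp d f)))).
  { refine (R_MP _ _ (Ax_taut (TImp (TImp (tbigand l) TBot) (TImp (tbigand (filter iscl l)) (TProp (PImp d f))))
            _) Ht).
    intros va vc vb. unfold TBot. cbn [teval peval].
    destruct (teval va vc vb (tbigand (filter iscl l))) eqn:E1, (peval va d) eqn:E2, (peval va f) eqn:E3;
      simpl; try reflexivity; try (destruct (teval va vc vb (tbigand l)); reflexivity).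
    rewrite (key G d f va vc vb l HF E1 E2 E3). reflexivity. }
  apply R_S5F in T.
  2: { rewrite Forall_forall; intros x Hx. apply filter_In in Hx as [_ Hx]. apply iscl_lit; auto. }
  apply mcs_closed; auto. apply (D_MP _ (tbigand (filter iscl l))); [apply D_thm; auto|].
  apply D_hyp, mcs_bigand; auto. rewrite Forall_forall in *; intros x Hx.
  apply filter_In in Hx as [Hx Hc]. destruct (HF x Hx) as [->|[->|[_ Hg]]]; auto; discriminate.
Qed.

Definition nxt (i : nat) := match i with 0 => 1 | 1 => 2 | _ => 0 end.

Theorem lemma2 (G : tform -> Prop) (d : pform)
  (D : tform -> Prop) (f : pform) (i : nat) :
  MCS G ->
  maxset G (trset G d) (D, f, i) ->
  likely G f D /\ G (TCond (PNeg (PImp d f)) PBot).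
Proof.
  intros HG [[[HD [HeqD Hi]] Hdd] Hmax].
  split.
  - assert (H : sgeq G (D, f, i) (D, f, nxt i)).
    { apply Hmax. split; [split; [auto|split; [auto|]]|auto].
      destruct i as [|[|[|]]]; simpl; lia.
      destruct i as [|[|[|]]]; simpl; try lia; auto. }
    destruct H as [[H _]|H]; auto. exfalso.
    destruct i as [|[|[|]]]; simpl in H; lia.
  - destruct (classic (G (TCond (PNeg (PImp d f)) PBot))) as [H|Hn]; auto. exfalso.
    destruct (lindenbaum tl tl_all (S0 G d f) (S0_cons G d f HG Hn)) as [O [HO Hsub]].
    assert (HeqO : cond_equiv G O).
    { intros g h; split; intros H.
      - apply Hsub. right; right; split; auto.
      - destruct (proj2 HG (TCond g h)) as [H'|H']; auto. exfalso.
        apply (mcs_noboth O (TCond g h)); auto. apply Hsub. right; right; split; auto. }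
    assert (H : sgeq G (D, f, i) (O, f, nxt i)).
    { apply Hmax. split; [split; [auto|split; [auto|]]|].
      destruct i as [|[|[|]]]; simpl; lia.
      apply Hsub; left; auto.
      destruct i as [|[|[|]]]; simpl; try lia; auto. }
    destruct H as [[_ H]|H].
    + apply (mcs_noboth O (TProp f)); auto.
      assert (Hnf : O (TProp (PNeg f))) by (apply Hsub; right; left; auto).
      apply mcs_closed; auto. apply (D_MP _ (TProp (PNeg f))); [apply D_thm; apply Ax_taut; intros va vc vb; cbn; destruct (peval va f); reflexivity | apply D_hyp; auto].
    + destruct i as [|[|[|]]]; simpl in H; lia.
Qed.
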